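(* Let $(\mathfrak{g},[\cdot,\cdot],\langle\cdot,\cdot\rangle)$ be a quadratic Lie algebra with center $Z(\mathfrak{g})$. (1) If $H^2(\mathfrak{g})=\{0\}$ and $Z(\mathfrak{g})\neq\{0\}$, then $\mathfrak{g}$ admits no $k$-symplectic structure (for any $k\ge1$). (2) If $\dim Z(\mathfrak{g})=1$ and the restriction of $\langle\cdot,\cdot\rangle$ to $Z(\mathfrak{g})$ is nondegenerate, then every derivation $D$ of $\mathfrak{g}$ which is skew-symmetric with respect to $\langle\cdot,\cdot\rangle$ satisfies $D(Z(\mathfrak{g}))=0$. In particular $\mathfrak{g}$ admits no $k$-symplectic structure (for any $k\ge1$).
   Context: A quadratic Lie algebra is a finite-dimensional real Lie algebra $\mathfrak{g}$ endowed with a nondegenerate symmetric bilinear form $\langle\cdot,\cdot\rangle$ which is invariant: $\langle [u,v],w\rangle+\langle [u,w],v\rangle=0$ for all $u,v,w\in\mathfrak{g}$. $H^2(\mathfrak{g})$ denotes the second Chevalley–Eilenberg cohomology group of $\mathfrak{g}$ with trivial real coefficients. A $k$-symplectic structure on a real Lie algebra $\mathfrak{g}$ of dimension $n(k+1)$ ($n,k\ge1$) is a pair consisting of a Lie subalgebra $\mathfrak{h}\subset\mathfrak{g}$ of dimension $nk$ and a family $(\theta_1,\dots,\theta_k)$ of skew-symmetric bilinear forms on $\mathfrak{g}$ such that: (i) $\bigcap_{i=1}^k\ker\theta_i=\{0\}$, where $\ker\theta_i=\{u\in\mathfrak{g}:\theta_i(u,v)=0\ \forall v\in\mathfrak{g}\}$;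 (ii) each $\theta_i$ is a 2-cocycle: $\theta_i([u,v],w)+\theta_i([v,w],u)+\theta_i([w,u],v)=0$ for all $u,v,w$; (iii) $\theta_i(u,v)=0$ for all $u,v\in\mathfrak{h}$ and all $i$. $\mathfrak{g}$ admits a $k$-symplectic structure if such data exist (for the appropriate $n$). *)

(* Defs.v *)
From HB Require Import structures.
From mathcomp Require Import all_boot all_order all_algebra.
From mathcomp Require Export reals.
Set Implicit Arguments. Unset Strict Implicit. Unset Printing Implicit Defensive.
Import Order.TTheory GRing.Theory Num.Theory.
Local Open Scope ring_scope.

Section QuadLie.
Variables (R : realType) (V : vectType R).
Variable br : V -> V -> V.

Definition bilinear_map (f : V -> V -> V) :=
  (forall a x y z, f (a *: x + y) z = a *: f x z + f y z) /\
  (forall a x y z, f x (a *: y + z) = a *: f x y + f x z).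

Definition bilinear_form (f : V -> V -> R) :=
  (forall a x y z, f (a *: x + y) z = a * f x z + f y z) /\
  (forall a x y z, f x (a *: y + z) = a * f x y + f x z).

Definition linear_form (f : V -> R) := forall a x y, f (a *: x + y) = a * f x + f y.
Definition linear_endo (D : V -> V) := forall a x y, D (a *: x + y) = a *: D x + D y.

Definition lie_bracket :=
  [/\ bilinear_map br, (forall x, br x x = 0) &
      (forall x y z, br x (br y z) + br y (br z x) + br z (br x y) = 0)].

Definition quadratic (B : V -> V -> R) :=
  [/\ lie_bracket, bilinear_form B, (forall u v, B u v = B v u),
      (forall u, (forall v, B u v = 0) -> u = 0) &
      (forall u v w, B (br u v) w + B (br u w) v = 0)].

Definition central (u : V) := forall v, br u v = 0.

Definition skew_form (th : V -> V -> R) := forall u v, th u v = - th v u.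

Definition cocycle2 (th : V -> V -> R) :=
  forall u v w, th (br u v) w + th (br v w) u + th (br w u) v = 0.

(* H^2(g) = 0 : every 2-cocycle is a coboundary, th(u,v) = - f([u,v]) *)
Definition H2_trivial :=
  forall th, bilinear_form th -> skew_form th -> cocycle2 th ->
    exists f, linear_form f /\ forall u v, th u v = - f (br u v).

Definition subalgebra (h : {vspace V}) :=
  forall u v, u \in h -> v \in h -> br u v \in h.

Definition k_symplectic (k : nat) :=
  exists n : nat, (0 < n)%N /\ \dim {: V} = (n * k.+1)%N /\
  exists (h : {vspace V}) (th : 'I_k -> V -> V -> R),
    [/\ subalgebra h /\ \dim h = (n * k)%N,
        (forall i, bilinear_form (th i) /\ skew_form (th i)),
        (forall u, (forall i v, th i u v = 0) -> u = 0),
        (forall i, cocycle2 (th i)) &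
        (forall i u v, u \in h -> v \in h -> th i u v = 0)].

Definition derivation (D : V -> V) :=
  linear_endo D /\ forall u v, D (br u v) = br (D u) v + br u (D v).

Definition skew_wrt (B : V -> V -> R) (D : V -> V) :=
  forall u v, B (D u) v + B u (D v) = 0.

Definition center_dim1 :=
  exists z, z != 0 /\ forall u, central u <-> exists a : R, u = a *: z.

Definition nondeg_on_center (B : V -> V -> R) :=
  forall u, central u -> (forall v, central v -> B u v = 0) -> u = 0.

End QuadLie.

(* Main.v *)
Require Import Defs.
From HB Require Import structures.
From mathcomp Require Import all_boot all_order all_algebra.
From mathcomp Require Import lra.
Import GRing.Theory Num.Theory.
Local Open Scope ring_scope.

Lemma linfunE' (K : fieldType) (aT rT : vectType K) (f : aT -> rT)
  (Hf : forall a x y, f (a *: x + y) = a *: f x + f y) : linfun f =1 f.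
Proof.
pose lf : {linear aT -> rT} := HB.pack f (GRing.isLinear.Build _ _ _ _ f Hf).
exact: (lfunE lf).
Qed.

Section Lin.
Variables (K : fieldType) (U : lmodType K) (f : U -> K).
Hypothesis Hf : forall a x y, f (a *: x + y) = a * f x + f y.
Lemma lf0 : f 0 = 0.
Proof. have := Hf 1 0 0; rewrite scaler0 addr0 mul1r => /eqP; rewrite -subr_eq0 opprD addrA subrr sub0r oppr_eq0 => /eqP. by []. Qed.
Lemma lfZ a x : f (a *: x) = a * f x.
Proof. by rewrite -[a *: x]addr0 Hf lf0 addr0. Qed.
Lemma lfD x y : f (x + y) = f x + f y.
Proof. by rewrite -[x]scale1r Hf mul1r scale1r. Qed.
Lemma lfB x y : f (x - y) = f x - f y.
Proof. by rewrite -scaleN1r addrC Hf mulN1r addrC. Qed.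
End Lin.

Lemma riesz (K : fieldType) (V : vectType K) (B : V -> V -> K)
  (HB1 : forall a x y z, B (a *: x + y) z = a * B x z + B y z)
  (HB2 : forall a x y z, B x (a *: y + z) = a * B x y + B x z)
  (Hnd : forall u, (forall v, B u v = 0) -> u = 0)
  (phi : V -> K) (Hphi : forall a x y, phi (a *: x + y) = a * phi x + phi y) :
  exists c, forall v, phi v = B c v.
Proof.
pose Bf c : 'Hom(V, K^o) := linfun (fun v => (B c v : K^o)).
have BfE c v : Bf c v = B c v by rewrite linfunE' //; move=> a x y; exact: HB2.
pose Phi : 'Hom(V, 'Hom(V, K^o)) := linfun Bf.
have PhiE c : Phi c = Bf c.
  rewrite linfunE' // => a x y; apply/lfunP => v.
  by rewrite add_lfunE scale_lfunE /= !BfE HB1.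
have inj : lker Phi == 0%VS.
  apply/lker0P => c d; rewrite !PhiE => e; apply/eqP; rewrite -subr_eq0; apply/eqP/Hnd => v.
  have := congr1 (fun f : 'Hom(V, K^o) => f v) e; rewrite /= !BfE (@lfB _ _ (B^~ v) (fun a x y => HB1 a x y v)) => ->.
  by rewrite subrr.
have full : limg Phi = fullv.
  apply/eqP; rewrite eqEdim subvf limg_dim_eq; last by rewrite (eqP inj) capv0.
  by rewrite !dimvf; change (dim V * 1 <= dim V)%N; rewrite muln1.
have : linfun (phi : V -> K^o) \in limg Phi by rewrite full memvf.
case/memv_imgP => c _ e; exists c => v.
have := congr1 (fun f : 'Hom(V, K^o) => f v) e.
by rewrite /= PhiE BfE linfunE'.
Qed.

Section LinV.
Variables (K : fieldType) (U W : lmodType K) (f : U -> W).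
Hypothesis Hf : forall a x y, f (a *: x + y) = a *: f x + f y.
Lemma lv0 : f 0 = 0.
Proof. have := Hf 1 0 0; rewrite scaler0 addr0 scale1r => /eqP; rewrite -subr_eq0 opprD addrA subrr sub0r oppr_eq0 => /eqP. by []. Qed.
Lemma lvZ a x : f (a *: x) = a *: f x.
Proof. by rewrite -[a *: x]addr0 Hf lv0 addr0. Qed.
Lemma lvD x y : f (x + y) = f x + f y.
Proof. by rewrite -[x]scale1r Hf !scale1r. Qed.
End LinV.

Theorem mainTheorem2 (R : realType) (V : vectType R) (br : V -> V -> V)
    (B : V -> V -> R) (HQ : quadratic br B) :
  (H2_trivial br -> (exists z : V, central br z /\ z != 0) ->
     forall k : nat, (0 < k)%N -> ~ k_symplectic br k) /\
  (center_dim1 br -> nondeg_on_center br B ->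
     (forall D : V -> V, derivation br D -> skew_wrt B D ->
        forall z : V, central br z -> D z = 0) /\
     (forall k : nat, (0 < k)%N -> ~ k_symplectic br k)).
Proof.
case: HQ => [[[brl brr] alt jac] [Bl Br] Bsym Bnd Binv].
have brD1 x y w : br (x + y) w = br x w + br y w by exact: (@lvD _ _ _ (br^~ w) (fun a x y => brl a x y w)).
have brD2 x y w : br w (x + y) = br w x + br w y by exact: (@lvD _ _ _ (br w) (brr^~ w)).
have brN x y : br x y = - br y x.
  have := alt (x + y); rewrite brD1 !brD2 !alt add0r addr0 => /eqP.
  by rewrite addr_eq0 => /eqP.
have zeroth (t : R) : t = - t -> t = 0 by move=> ?; lra.
split.
  move=> H2 [z [cz nz]] k _ [n [_ [_ [h [th [_ Hth Hker Hcoc _]]]]]].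
  move/negP: nz; apply; apply/eqP; apply: Hker => i v.
  case: (Hth i) => bt st; case: (H2 _ bt st (Hcoc i)) => f [lf ->].
  by rewrite cz (@lf0 _ _ f lf) oppr0.
move=> [z0 [nz0 Hc]] Bndc.
have Bzz : B z0 z0 != 0.
  apply/eqP => e; move/negP: nz0; apply; apply/eqP; apply: Bndc.
    by apply/Hc; exists 1; rewrite scale1r.
  by move=> v /Hc [a ->]; rewrite (@lfZ _ _ (B z0) (Br^~ z0)) e mulr0.
have z0c : central br z0 by apply/Hc; exists 1; rewrite scale1r.
have cenA c : (forall u v, B c (br u v) = 0) -> central br c.
  move=> Hcv u; apply: Bnd => v.
  rewrite brN -scaleN1r (@lfZ _ _ (B^~ v) (fun a x y => Bl a x y v)).
  have := Binv u c v; rewrite Bsym (Bsym (br u v)) Hcv addr0 => ->.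
  by rewrite mulr0.
split.
  move=> D [lD dD] sD z cz.
  have Dc : central br (D z0).
    move=> v; have := dD z0 v; rewrite z0c (@lv0 _ _ _ D lD) z0c addr0 => /eqP.
    by rewrite eq_sym => /eqP.
  case/Hc: Dc => b eb.
  have b0 : b = 0.
    have := sD z0 z0; rewrite eb (@lfZ _ _ (B^~ z0) (fun a x y => Bl a x y z0)).
    rewrite (@lfZ _ _ (B z0) (Br^~ z0)) => /eqP; rewrite -mulrDl mulf_eq0 (negbTE Bzz) orbF.
    move/eqP => e; lra.
  case/Hc: cz => a ->; by rewrite (@lvZ _ _ _ D lD) eb b0 scale0r scaler0.
move=> k _ [n [_ [_ [h [th [_ Hth Hker Hcoc _]]]]]].
move/negP: nz0; apply; apply/eqP; apply: Hker => i v.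
case: (Hth i) => [[tl tr] st].
have [c Hcv] := @riesz _ _ B Bl Br Bnd _ (tr^~ z0).
have cc : central br c.
  apply: cenA => u w; rewrite -Hcv st.
  have := Hcoc i u w z0; rewrite (brN w z0) z0c oppr0 (@lf0 _ _ (th i ^~ u) (fun a x y => tl a x y u)).
  by rewrite z0c (@lf0 _ _ (th i ^~ w) (fun a x y => tl a x y w)) !addr0 => ->; rewrite oppr0.
case/Hc: cc => a ea.
have a0 : a = 0.
  have := Hcv z0; rewrite ea (@lfZ _ _ (B^~ z0) (fun a x y => Bl a x y z0)).
  rewrite (zeroth _ (st z0 z0)) => /eqP; rewrite eq_sym mulf_eq0 (negbTE Bzz) orbF.
  by move/eqP.
by rewrite Hcv ea a0 scale0r (@lf0 _ _ (B^~ v) (fun a x y => Bl a x y v)).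
Qed.
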